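(* For $K>\hat K^*:=\frac{b\sigma_2}{b-\mu_0}$ let $R(K)$ denote the $R$-component of the unique equilibrium $G_4(K)=(S^*,0,I_2^*,0,R^* )$ of the system below with positive $S^*,I_2^*,R^*$ (so $R(K)$ is the unique root in $(0,S^{**}-\sigma_2)$ of $\big(S^{**}-\sigma_2-R+\frac{K}{b}(\mu_0-\mu_4')\big)R+\frac{\rho_2}{\alpha_2}(S^{**}-\sigma_2-R)=0$). Then $K\mapsto R(K)$ is differentiable on $(\hat K^*,\infty)$ and $$0<K\frac{dR}{dK}<\sigma_2+R(K).$$
   Context: Consider, for $t\ge0$, the system $S'=\big(b(1-\tfrac{N}{K})-\alpha_1I_1-\alpha_2I_2-(\beta_1+\beta_2+\alpha_3)I_{12}-\mu_0\big)S$, $I_1'=\big(b(1-\tfrac{N}{K})+\alpha_1S-\eta_1I_{12}-\gamma_1I_2-\mu_1\big)I_1+\beta_1SI_{12}$, $I_2'=\big(b(1-\tfrac{N}{K})+\alpha_2S-\eta_2I_{12}-\gamma_2I_1-\mu_2\big)I_2+\beta_2SI_{12}$, $I_{12}'=\big(b(1-\tfrac{N}{K})+\alpha_3S+\eta_1I_1+\eta_2I_2-\mu_3\big)I_{12}+(\gamma_1+\gamma_2)I_1I_2$, $R'=\big(b(1-\tfrac{N}{K})-\mu_4'\big)R+\rho_1I_1+\rho_2I_2+\rho_3I_{12}$, where $N=S+I_1+I_2+I_{12}+R$. All parameters $b,K,\alpha_i,\beta_i,\gamma_i,\eta_i,\rho_i,\mu_0,\mu_i'$ are positive and $\mu_i=\rho_i+\mu_i'$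 for $i=1,2,3$; $K$ is regarded as a varying parameter, the others fixed. Standing assumptions: $b>\mu_0$, $b>\mu_i$ ($i=1,2,3$), $b>\mu_4'$, and $\mu_0<\mu_4'<\mu_j'$ for $j=1,2,3$. Set $\sigma_k=(\mu_k-\mu_0)/\alpha_k$ ($k=1,2,3$), assumed to satisfy $\sigma_1<\sigma_2<\sigma_3$, and $S^{**}=\frac{K}{b}(b-\mu_0)$. *)

(* Defs.v *)
From Stdlib Require Export Reals Lra.
Open Scope R_scope.

(* mu_k = rho_k + mu_k' ;  sigma_k = (mu_k - mu0)/alpha_k *)
Definition sigmak (rho mu' mu0 alpha : R) : R := ((rho + mu') - mu0) / alpha.

Definition Sss (K b mu0 : R) : R := K / b * (b - mu0).

Definition Khat (b mu0 s2 : R) : R := b * s2 / (b - mu0).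

Definition G4_R_eq (K b mu0 mu4' rho2 alpha2 s2 x : R) : Prop :=
  (Sss K b mu0 - s2 - x + K / b * (mu0 - mu4')) * x
    + rho2 / alpha2 * (Sss K b mu0 - s2 - x) = 0.

(* Main.v *)
Require Import Defs.
From Stdlib Require Import Reals Lra Psatz.
From Coquelicot Require Import Coquelicot.
Open Scope R_scope.

Lemma gen (a c r s : R) (RK : R -> R)
  (Ha : 0 < a) (Hac : 0 < a + c) (Hc : c < 0) (Hr : 0 < r) (Hs : 0 < s)
  (H : forall K, s / a < K -> 0 < RK K < a*K - s /\
        (a*K - s - RK K + c*K)*RK K + r*(a*K - s - RK K) = 0) :
  forall K, s / a < K -> exists dR, derivable_pt_lim RK K dR /\
      0 < K * dR < s + RK K.
Proof.
  pose (Bf := fun K => (a+c)*K - s - r).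
  pose (Df := fun K => Bf K * Bf K + 4*r*(a*K - s)).
  pose (g0 := fun K => (Bf K + sqrt (Df K))/2).
  assert (Hsa : forall K, s / a < K -> s < a*K).
  { intros K HK. apply (Rmult_lt_compat_l a) in HK; auto.
    replace (a*(s/a)) with s in HK by (field; lra). lra. }
  assert (Hf : forall K, s/a < K -> RK K = g0 K /\ 0 < Df K /\ sqrt (Df K) = 2*RK K - Bf K).
  { intros K HK. pose proof (Hsa K HK). destruct (H K HK) as [[H1 H2] H3].
    assert (HD : 0 < Df K) by (unfold Df; nra).
    pose proof (sqrt_sqrt (Df K) (Rlt_le _ _ HD)) as Hq.
    pose proof (sqrt_lt_R0 _ HD) as Hq0.
    assert (E : (2*RK K - Bf K - sqrt (Df K))*(2*RK K - Bf K + sqrt (Df K)) = 0).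
    { unfold Df, Bf in *. nra. }
    apply Rmult_integral in E. destruct E as [E|E].
    - split; [unfold g0; lra|split; [exact HD|lra]].
    - exfalso. assert (sqrt (Df K) * sqrt (Df K) > Bf K * Bf K) by (assert (Df K > Bf K * Bf K) by (unfold Df; nra); lra).
      nra. }
  intros K HK. pose proof (Hsa K HK). destruct (Hf K HK) as [E1 [HD E2]].
  destruct (H K HK) as [[H1 H2] H3].
  remember (RK K) as x eqn:Ex.
  exists (((a+c)*x + r*a)/(2*x - Bf K)).
  assert (Hpos : 0 < 2*x - Bf K) by (rewrite <- E2; apply sqrt_lt_R0; auto).
  split.
  - apply is_derive_Reals.
    apply (is_derive_ext_loc g0).
    { apply (filter_imp (fun t => s/a < t)).
      - intros t Ht. symmetry. apply (Hf t Ht).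
      - apply open_gt. exact HK. }
    unfold g0, Df, Bf. auto_derive.
    + fold (Bf K). fold (Df K). exact HD.
    + match goal with |- context [sqrt ?z] => assert (Eq : sqrt z = 2*x - Bf K) by (rewrite <- E2; unfold Df, Bf; f_equal; ring); rewrite Eq end.

      unfold Bf in *. field. lra.
  - assert (HK0 : 0 < K).
    { apply Rlt_trans with (s/a); auto. apply Rdiv_lt_0_compat; auto. }
    split.
    + apply Rmult_lt_0_compat; auto. apply Rdiv_lt_0_compat; nra.
    + replace (K * (((a + c) * x + r * a) / (2 * x - Bf K)))
        with ((K * ((a + c) * x + r * a)) / (2 * x - Bf K)) by (field; lra).
      apply Rmult_lt_reg_r with (2*x - Bf K); auto.
      unfold Rdiv. rewrite Rmult_assoc, Rinv_l, Rmult_1_r by lra.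
      assert (Hneg : a*K - s - x + c*K < 0) by nra.
      unfold Bf. nra.
Qed.

Theorem proposition5
  (b alpha1 alpha2 alpha3 beta1 beta2 gamma1 gamma2 eta1 eta2
   rho1 rho2 rho3 mu0 mu1' mu2' mu3' mu4' : R)
  (Hpos : 0 < b /\ 0 < alpha1 /\ 0 < alpha2 /\ 0 < alpha3 /\ 0 < beta1 /\
          0 < beta2 /\ 0 < gamma1 /\ 0 < gamma2 /\ 0 < eta1 /\ 0 < eta2 /\
          0 < rho1 /\ 0 < rho2 /\ 0 < rho3 /\ 0 < mu0 /\ 0 < mu1' /\
          0 < mu2' /\ 0 < mu3' /\ 0 < mu4')
  (Hb0 : mu0 < b)
  (Hb1 : rho1 + mu1' < b) (Hb2 : rho2 + mu2' < b) (Hb3 : rho3 + mu3' < b)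
  (Hb4 : mu4' < b)
  (Hm0 : mu0 < mu4')
  (Hm1 : mu4' < mu1') (Hm2 : mu4' < mu2') (Hm3 : mu4' < mu3')
  (Hs12 : sigmak rho1 mu1' mu0 alpha1 < sigmak rho2 mu2' mu0 alpha2)
  (Hs23 : sigmak rho2 mu2' mu0 alpha2 < sigmak rho3 mu3' mu0 alpha3)
  (RK : R -> R)
  (HRK : forall K, Khat b mu0 (sigmak rho2 mu2' mu0 alpha2) < K ->
     0 < RK K < Sss K b mu0 - sigmak rho2 mu2' mu0 alpha2 /\
     G4_R_eq K b mu0 mu4' rho2 alpha2 (sigmak rho2 mu2' mu0 alpha2) (RK K)) :
  forall K, Khat b mu0 (sigmak rho2 mu2' mu0 alpha2) < K ->
    exists dR, derivable_pt_lim RK K dR /\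
      0 < K * dR < sigmak rho2 mu2' mu0 alpha2 + RK K.
Proof.
  destruct Hpos as (Hb & _ & Ha2 & _ & _ & _ & _ & _ & _ & _ & _ & Hr2 & _).
  set (s := sigmak rho2 mu2' mu0 alpha2) in *.
  assert (Hs : 0 < s) by (unfold s, sigmak; apply Rdiv_lt_0_compat; lra).
  assert (EK : Khat b mu0 s = s / ((b - mu0) / b)) by (unfold Khat; field; lra).
  intros K HK.
  apply (gen ((b - mu0) / b) ((mu0 - mu4') / b) (rho2 / alpha2) s RK).
  - apply Rdiv_lt_0_compat; lra.
  - replace ((b - mu0) / b + (mu0 - mu4') / b) with ((b - mu4') / b) by (field; lra).
    apply Rdiv_lt_0_compat; lra.
  - unfold Rdiv. apply Rmult_neg_pos; [lra | apply Rinv_0_lt_compat; lra].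
  - apply Rdiv_lt_0_compat; lra.
  - exact Hs.
  - intros K0 HK0. rewrite <- EK in HK0. destruct (HRK K0 HK0) as [H1 H2].
    unfold G4_R_eq, Sss in *.
    replace ((b - mu0) / b * K0) with (K0 / b * (b - mu0)) by (field; lra).
    replace ((mu0 - mu4') / b * K0) with (K0 / b * (mu0 - mu4')) by (field; lra).
    split; [exact H1 | exact H2].
  - rewrite <- EK. exact HK.
Qed.
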